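(* Fix $\theta$ with $\phi(\theta)<\beta$ and fix $Q\in\{0,1\}$. Then $$\lim_{\tau\to\tau^\star(\theta)^+}u(s_1(\theta,\tau))=\lim_{\tau\to\tau^\star(\theta)^-}u(s_2(\theta,\tau)).$$
   Context: Setup. Let $Q\in\{0,1\}$ be a random variable with $\mathbb P(Q=1)=\pi\in(0,1)$, and let $(\Theta,\Gamma)$ be a real-valued random vector whose conditional joint density given $Q=1$ is $h_q$ and given $Q=0$ is $h_u$, both strictly positive on $\mathbb R^2$. Monotone likelihood ratio assumption: $l(\theta,\gamma)=h_q(\theta,\gamma)/h_u(\theta,\gamma)$ is continuous and strictly increasing in each of $\theta$ and $\gamma$, and for each $\theta$ the map $\gamma\mapsto l(\theta,\gamma)$ has infimum $0$ and supremum $+\infty$. Fix payoffs $x_q>0$, $x_u>0$. For $\tau\in(-x_u,x_q)$ let $A(\tau)=\mathbb 1\{l(\Theta,\Gamma)>\frac{(1-\pi)(x_u+\tau)}{\pi(x_q-\tau)}\}$, $s_1(\theta,\tau)=\mathbb E[Q\mid\Theta=\theta,A(\tau)=1]$, $s_2(\theta,\tau)=\mathbb E[A(\tau)\mid\Theta=\theta]$, $\phi(\theta)=\mathbb P(Q=1\mid\Theta=\theta)$. The equalizing prejudice $\tau^\star(\theta)$ is the unique $\tau\in(-x_u,x_q)$ with $s_1(\theta,\tau)=s_2(\theta,\tau)$. Regret. Fix a cutoff $c\in(-x_u,x_q)$ and let $\beta=(x_u+c)/(x_q+x_u)\in(0,1)$. For a score value $s\in[0,1]$ and a qualification value $Q\in\{0,1\}$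 define $\mathcal N(s)=sx_q-(1-s)x_u$, $A'(s)=\mathbb 1\{\mathcal N(s)>c\}$ (i.e. $s>\beta$), $\mathcal P(s)=A'(s)(Qx_q-(1-Q)x_u)$, and the individual regret $u(s)=\mathcal N(s)-\mathcal P(s)$. For a fixed applicant $(\theta,Q)$, $u(s_k(\theta,\tau))$ is viewed as a function of $\tau\in(-x_u,x_q)$. *)

(* Defs.v *)
From HB Require Import structures.
From mathcomp Require Import all_boot all_order all_algebra.
From mathcomp Require Import all_classical all_reals all_analysis.
Set Implicit Arguments. Unset Strict Implicit. Unset Printing Implicit Defensive.
Import Order.TTheory GRing.Theory Num.Theory.
Import numFieldNormedType.Exports.
Local Open Scope classical_set_scope.
Local Open Scope ring_scope.

Section Model.
Variables (R : realType) (hq hu : R -> R -> R) (pi xq xu : R).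

Definition lratio (t g : R) : R := hq t g / hu t g.

Definition thr (tau : R) : R := ((1 - pi) * (xu + tau)) / (pi * (xq - tau)).

(* {gamma | A(tau) = 1} at Theta = theta *)
Definition accset (t tau : R) : set R := [set g | thr tau < lratio t g].

Definition smass (h : R -> R -> R) (t : R) (D : set R) : R :=
  Rintegral (@lebesgue_measure R) D (h t).

(* joint sub-density of (Theta = t, A(tau) = 1) *)
Definition accmass (t tau : R) : R :=
  pi * smass hq t (accset t tau) + (1 - pi) * smass hu t (accset t tau).

(* marginal density of Theta at t *)
Definition margmass (t : R) : R :=
  pi * smass hq t setT + (1 - pi) * smass hu t setT.

(* s_1(theta,tau) = E[Q | Theta = theta, A(tau) = 1] *)
Definition s1 (t tau : R) : R := pi * smass hq t (accset t tau) / accmass t tau.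

(* s_2(theta,tau) = E[A(tau) | Theta = theta] *)
Definition s2 (t tau : R) : R := accmass t tau / margmass t.

(* phi(theta) = P(Q = 1 | Theta = theta) *)
Definition phi (t : R) : R := pi * smass hq t setT / margmass t.
End Model.

Section Regret.
Variables (R : realType) (xq xu c : R).

Definition beta : R := (xu + c) / (xq + xu).
Definition Nval (s : R) : R := s * xq - (1 - s) * xu.
Definition Aprime (s : R) : bool := c < Nval s.
(* Q : bool, true = qualified (Q = 1) *)
Definition Pval (s : R) (Q : bool) : R :=
  (if Aprime s then 1 else 0) * ((if Q then 1 else 0) * xq - (1 - (if Q then 1 else 0)) * xu).
Definition regret (s : R) (Q : bool) : R := Nval s - Pval s Q.
End Regret.

(* Main.v *)
Require Import Defs.
From HB Require Import structures.
From mathcomp Require Import all_boot all_order all_algebra.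
From mathcomp Require Import all_classical all_reals all_analysis.
From mathcomp Require Import ring lra.
Import Order.TTheory GRing.Theory Num.Theory.
Import numFieldNormedType.Exports.
Local Open Scope classical_set_scope.
Local Open Scope ring_scope.

Section S_a.
Variable R : realType.
Notation mu := (@lebesgue_measure R).

Lemma int_pos (f : R -> R) a b : (forall x, x \in `]a, b] -> 0 < f x) ->
  mu.-integrable [set: R] (EFin \o f) -> a < b ->
  0 < \int[mu]_(x in `]a, b]) f x.
Proof.
move=> fp fi ab.
have mD : measurable (`]a, b] : set (measurableTypeR R)) by [].
have fiD : mu.-integrable `]a, b] (EFin \o f) by exact: integrableS fi.
rewrite lt_def Rintegral_ge0 ?andbT; last by move=> x xD; apply/ltW/fp.
apply/eqP => H0.
have fin := integrable_fin_num mD fiD.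
have H1 : (\int[mu]_(x in `]a, b]) `|(f x)%:E|)%E = 0.
  transitivity (\int[mu]_(x in `]a, b]) (EFin \o f) x)%E.
    apply: eq_integral => x xD; rewrite gee0_abs// lee_fin; apply/ltW/fp; exact: set_mem.
  by rewrite -(fineK fin); move: H0; rewrite /Rintegral => ->.
have /integrableP[mf _] := fiD.
have [N [mN N0 sub]] := (ae_eq_integral_abs mu mD mf).1 H1.
have : (mu `]a, b] <= mu N)%E.
  apply: le_measure; rewrite ?inE//.
  move=> x xD; apply: sub => /= /(_ xD) /eqP.
  by rewrite /cst eqe (gt_eqF (fp x xD)).
rewrite N0 lebesgue_measure_itv/= lte_fin ab lee_fin subr_le0 leNgt ab.
by [].
Qed.

Definition Fint (f : R -> R) (a : R) := \int[mu]_(x in `]a, +oo[) f x.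

Lemma Fint_split (f : R -> R) a b : mu.-integrable [set: R] (EFin \o f) -> a <= b ->
  Fint f a = \int[mu]_(x in `]a, b]) f x + Fint f b.
Proof.
move=> fi ab; rewrite /Fint.
rewrite (@itv_bndbnd_setU _ _ _ (BRight b)) ?bnd_simp//.
rewrite Rintegral_setU//.
- by apply: integrableS fi => //; exact: measurableU.
- apply/disj_set2P; rewrite -subset0 => z/=; rewrite !in_itv/= => -[/andP[_]].
  by move=> zb /andP[bz _]; move: (lt_le_trans bz zb); rewrite ltxx.
Qed.

Lemma Fint_cont (f : R -> R) : mu.-integrable [set: R] (EFin \o f) ->
  continuous (Fint f).
Proof.
move=> fi x; apply/cvgrPdist_le => /= e e0.
have [d [d0 dH]] := integral_normr_continuous fi e0.
have key : forall y z, y <= z -> z - y < d -> `|Fint f y - Fint f z| <= e.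
  move=> y z yz zyd; rewrite (@Fint_split f y z fi yz) addrK.
  apply: le_trans (le_normr_Rintegral _ _) _ => //; first exact: integrableS fi.
  apply/ltW/dH => //.
  have := lebesgue_measure_itv `]y, z]; rewrite /= => ->.
  case: ifP => _; last by rewrite lte_fin.
  by rewrite -EFinD lte_fin.
exists d => //= y /= xy.
have [le|le] := leP x y.
- apply: key => //; move: xy; by rewrite distrC ger0_norm ?subr_ge0.
- rewrite distrC; apply: key; first exact: ltW.
  by move: xy; rewrite ger0_norm ?subr_ge0// ltW.
Qed.

Lemma Fint_pos (f : R -> R) b : (forall x, b < x -> 0 < f x) ->
  mu.-integrable [set: R] (EFin \o f) -> 0 < Fint f b.
Proof.
move=> fp fi; rewrite (@Fint_split f b (b + 1) fi); last by rewrite lerDl.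
apply: ltr_pwDl.
  apply: int_pos => //; last by rewrite ltrDl.
  by move=> x; rewrite in_itv /= => /andP[bx _]; exact: fp.
apply: Rintegral_ge0 => x; rewrite /= in_itv /= andbT => bx.
by apply/ltW/fp; apply: lt_trans bx; rewrite ltrDl.
Qed.

Lemma Fint_lt (f : R -> R) a b : (forall x, 0 < f x) ->
  mu.-integrable [set: R] (EFin \o f) -> a < b -> Fint f b < Fint f a.
Proof.
move=> fp fi ab; rewrite (@Fint_split f a b fi (ltW ab)) ltrDr.
by apply: int_pos.
Qed.

Lemma intZ (D : set (measurableTypeR R)) (f : R -> R) k : measurable D ->
  mu.-integrable D (EFin \o f) -> mu.-integrable D (EFin \o (fun x => k * f x)).
Proof.
move=> mD fi; apply: (eq_integrable mD _ _ _ (integrableZl mD k fi)).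
by move=> x _; rewrite /= EFinM.
Qed.

Lemma intB (D : set (measurableTypeR R)) (f g : R -> R) : measurable D ->
  mu.-integrable D (EFin \o f) -> mu.-integrable D (EFin \o g) ->
  mu.-integrable D (EFin \o (fun x => f x - g x)).
Proof.
move=> mD fi gi; apply: (eq_integrable mD _ _ _ (integrableB mD fi gi)).
by move=> x _; rewrite /= EFinB.
Qed.

Section Ratio.
Variables fq fu : R -> R.
Hypothesis fqp : forall x, 0 < fq x.
Hypothesis fup : forall x, 0 < fu x.
Hypothesis fqi : mu.-integrable [set: R] (EFin \o fq).
Hypothesis fui : mu.-integrable [set: R] (EFin \o fu).
Hypothesis lmono : forall x y, x < y -> fq x / fu x < fq y / fu y.

Lemma Fratio a b : a < b -> Fint fq a * Fint fu b < Fint fq b * Fint fu a.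
Proof.
move=> ab.
set L := fq b / fu b.
rewrite (@Fint_split fq a b fqi (ltW ab)) (@Fint_split fu a b fui (ltW ab)).
set Iq := \int[mu]_(x in _) fq x; set Iu := \int[mu]_(x in _) fu x.
have Iu0 : 0 < Iu by apply: int_pos.
have Fu0 : 0 < Fint fu b by apply: Fint_pos.
have h1 : Iq <= L * Iu.
  rewrite /Iq /Iu -RintegralZl //; last exact: integrableS fui.
  apply: le_Rintegral => //.
  - exact: integrableS fqi.
  - apply: integrableS (intZ _ _ L measurableT fui) => //.
  move=> x; rewrite /= in_itv /= => /andP[ax xb].
  have -> : fq x = fq x / fu x * fu x by rewrite divfK // gt_eqF.
  rewrite ler_wpM2r ?(ltW (fup x)) // /L.
  move: xb; rewrite le_eqVlt => /predU1P[-> //|xb].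
  exact/ltW/lmono.
have ki : mu.-integrable [set: R] (EFin \o (fun x => fq x - L * fu x)).
  apply: intB => //; exact: intZ measurableT fui.
have h2 : L * Fint fu b < Fint fq b.
  rewrite -subr_gt0.
  have -> : Fint fq b - L * Fint fu b = Fint (fun x => fq x - L * fu x) b.
    rewrite /Fint RintegralB //; last 2 first.
    - exact: integrableS fqi.
    - exact: integrableS (intZ _ _ L measurableT fui).
    rewrite RintegralZl //; exact: integrableS fui.
  apply: Fint_pos => // x bx; rewrite subr_gt0.
  have -> : fq x = fq x / fu x * fu x by rewrite divfK // gt_eqF.
  by rewrite ltr_pM2r // /L; exact: lmono.
have Fq0 : 0 < Fint fq b by apply: Fint_pos.
nra.
Qed.
End Ratio.
End S_a.

Section S_c.
Variable R : realType.

Lemma regret_lim (xq xu c : R) (Q : bool) (T : Type) (F : set_system T)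
  {FF : ProperFilter F} (f : T -> R) (s0 : R) :
  0 < xq -> 0 < xu -> f x @[x --> F] --> s0 -> (\forall x \near F, s0 < f x) ->
  regret xq xu c (f x) Q @[x --> F] -->
  (Nval xq xu s0 - (if c <= Nval xq xu s0 then 1 else 0) *
     ((if Q then 1 else 0) * xq - (1 - (if Q then 1 else 0)) * xu)).
Proof.
move=> xq0 xu0 fs0 fgt.
set pay := (_ * xq - _).
have HN : Nval xq xu (f x) @[x --> F] --> Nval xq xu s0.
  rewrite /Nval; apply: cvgB; first exact: cvgMl.
  by apply: cvgMl; apply: cvgB => //; exact: cvg_cst.
have Nlt s t : s < t -> Nval xq xu s < Nval xq xu t.
  move=> st; rewrite /Nval -subr_gt0.
  have -> : t * xq - (1 - t) * xu - (s * xq - (1 - s) * xu) = (t - s) * (xq + xu) by ring.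
  by rewrite mulr_gt0 ?subr_gt0 ?addr_gt0.
have [cle|clt] := leP c (Nval xq xu s0).
- rewrite mul1r; apply: cvg_trans (near_eq_cvg _) (cvgB HN (cvg_cst pay)).
  near=> x; rewrite /regret /Pval /Aprime.
  have -> : c < Nval xq xu (f x).
    by apply: (le_lt_trans cle); apply: Nlt; near: x.
  by rewrite mul1r.
- have Hlt : \forall x \near F, Nval xq xu (f x) < c.
    exact: (cvgr_lt (Nval xq xu s0) HN).
  rewrite mul0r subr0; apply: cvg_trans (near_eq_cvg _) HN.
  near=> x; rewrite /regret /Pval /Aprime.
  have -> : (c < Nval xq xu (f x)) = false.
    by apply/negbTE; rewrite -leNgt ltW//; near: x.
  by rewrite mul0r subr0.
Unshelve. all: by end_near. Qed.
End S_c.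

Section S_d.
Variable R : realType.
Notation mu := (@lebesgue_measure R).
Lemma integ_sec (h : R -> R -> R) (theta : R) :
  (forall t g, 0 < h t g) ->
  measurable_fun setT (fun p : R * R => h p.1 p.2) ->
  (\int[@lebesgue_measure R]_g (h theta g)%:E < +oo)%E ->
  mu.-integrable [set: R] (EFin \o h theta).
Proof.
move=> hp hm hi.
apply/integrableP; split.
  apply/measurable_realfun.measurable_EFinP.
  exact: (measurable_fun_pair2 theta hm).
apply: le_lt_trans hi; rewrite le_eqVlt; apply/orP; left; apply/eqP.
apply: eq_integral => x _ /=. by rewrite ger0_norm // ltW.
Qed.
End S_d.

Section S_e.
Variable R : realType.

Definition ainv (l : R -> R) (y : R) := xget 0 [set g | l g = y].

Section L.
Variable l : R -> R.
Hypothesis lc : continuous l.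
Hypothesis lmono : forall g1 g2, g1 < g2 -> l g1 < l g2.
Hypothesis lsmall : forall e, 0 < e -> exists g, l g < e.
Hypothesis lbig : forall M, exists g, M < l g.

Let lle : {mono l : x y / x <= y}. Proof. exact: le_mono. Qed.
Let llt : {mono l : x y / x < y}. Proof. exact: leW_mono. Qed.

Lemma ainvP y : 0 < y -> l (ainv l y) = y.
Proof.
move=> y0; rewrite /ainv; apply: (@xgetPex _ 0 [set g | l g = y]).
have [g1 g1y] := lsmall _ y0; have [g2 yg2] := lbig y.
have g12 : g1 <= g2 by rewrite -lle; apply/ltW/(lt_trans g1y yg2).
have [|g _ lg] := @IVT R l g1 g2 y g12 (continuous_subspaceT lc).
  by rewrite ge_min le_max (ltW g1y) (ltW yg2) /= orbT.
by exists g.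
Qed.

Lemma ainv_lt y1 y2 : 0 < y1 -> y1 < y2 -> ainv l y1 < ainv l y2.
Proof.
move=> y10 y12; rewrite -llt !ainvP //; exact: lt_trans y12.
Qed.

Lemma ainv_cont y0 : 0 < y0 -> {for y0, continuous (ainv l)}.
Proof.
move=> y00; apply/cvgrPdist_lt => e e0.
set a0 := ainv l y0.
have h1 : l (a0 - e) < y0 by rewrite -(ainvP _ y00) llt ltrBlDr ltrDl.
have h2 : y0 < l (a0 + e) by rewrite -(ainvP _ y00) llt ltrDl.
near=> y.
have yp : 0 < y by near: y; exact: lt_nbhsr.
have a1 : a0 - e < ainv l y by rewrite -llt ainvP //; near: y; exact: lt_nbhsr.
have a2 : ainv l y < a0 + e by rewrite -llt ainvP //; near: y; exact: lt_nbhsl.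
by rewrite ltr_distlC a1 a2.
Unshelve. all: by end_near. Qed.
End L.

Lemma thr_pos (pi xq xu t : R) : 0 < pi < 1 -> 0 < xq -> 0 < xu -> -xu < t < xq ->
  0 < thr pi xq xu t.
Proof.
move=> /andP[p0 p1] q0 u0 /andP[t1 t2]; rewrite /thr divr_gt0 // mulr_gt0 //.
- by rewrite subr_gt0.
- by rewrite -ltrBlDl sub0r.
- by rewrite subr_gt0.
Qed.

Lemma thr_lt (pi xq xu t1 t2 : R) : 0 < pi < 1 -> 0 < xq -> 0 < xu ->
  -xu < t1 -> t2 < xq -> t1 < t2 -> thr pi xq xu t1 < thr pi xq xu t2.
Proof.
move=> /andP[p0 p1] q0 u0 h1 h2 t12.
have d1 : 0 < pi * (xq - t1) by rewrite mulr_gt0 // subr_gt0; exact: lt_trans h2.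
have d2 : 0 < pi * (xq - t2) by rewrite mulr_gt0 // subr_gt0.
rewrite /thr ltr_pdivrMr // mulrAC ltr_pdivlMr //.
have p1' : 0 < 1 - pi by rewrite subr_gt0.
rewrite -subr_gt0.
have -> : (1 - pi) * (xu + t2) * (pi * (xq - t1)) - (1 - pi) * (xu + t1) * (pi * (xq - t2))
  = ((1 - pi) * pi) * ((t2 - t1) * (xq + xu)) by ring.
by rewrite !mulr_gt0 // ?subr_gt0 // addr_gt0.
Qed.

Lemma thr_cont (pi xq xu t : R) : 0 < pi -> t < xq ->
  thr pi xq xu x @[x --> t] --> thr pi xq xu t.
Proof.
move=> p0 tq; rewrite /thr.
apply: cvgM.
  apply: cvgMr; apply: cvgD; [exact: cvg_cst | exact: cvg_id].
apply: cvgV; first by rewrite mulf_neq0 ?gt_eqF // subr_gt0.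
apply: cvgMr; apply: cvgB; [exact: cvg_cst | exact: cvg_id].
Qed.
End S_e.


Lemma Rint_setT_pos (R : realType) (f : R -> R) : (forall x, 0 < f x) ->
  (@lebesgue_measure R).-integrable [set: R] (EFin \o f) ->
  0 < Rintegral (@lebesgue_measure R) [set: R] f.
Proof.
move=> fp fi.
rewrite -(set_itvNyy R) (@itv_bndbnd_setU _ _ _ (BRight 0)) //.
rewrite Rintegral_setU //.
- apply: ltr_wpDl; first by apply: Rintegral_ge0 => x _; exact/ltW.
  exact: Fint_pos.
- by rewrite -itv_bndbnd_setU // set_itvNyy.
- apply/disj_set2P; rewrite -subset0 => z/=; rewrite !in_itv/= => -[].
  by move=> z0 /andP[/(le_lt_trans z0)]; rewrite ltxx.
Qed.

Theorem mainTheorem12 (R : realType) (hq hu : R -> R -> R) (pi xq xu c : R)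
  (theta taus : R) (Q : bool) :
  (* standing assumptions *)
  0 < pi < 1 -> 0 < xq -> 0 < xu ->
  (forall t g, 0 < hq t g) -> (forall t g, 0 < hu t g) ->
  measurable_fun setT (fun p : R * R => hq p.1 p.2) ->
  measurable_fun setT (fun p : R * R => hu p.1 p.2) ->
  (\int[(@lebesgue_measure R \x @lebesgue_measure R)%E]_p (hq p.1 p.2)%:E = 1)%E ->
  (\int[(@lebesgue_measure R \x @lebesgue_measure R)%E]_p (hu p.1 p.2)%:E = 1)%E ->
  (* conditional densities given Theta = theta are well defined *)
  (\int[@lebesgue_measure R]_g (hq theta g)%:E < +oo)%E ->
  (\int[@lebesgue_measure R]_g (hu theta g)%:E < +oo)%E ->
  (* monotone likelihood ratio *)
  continuous (fun p : R * R => lratio hq hu p.1 p.2) ->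
  (forall g t1 t2, t1 < t2 -> lratio hq hu t1 g < lratio hq hu t2 g) ->
  (forall t g1 g2, g1 < g2 -> lratio hq hu t g1 < lratio hq hu t g2) ->
  (forall t e, 0 < e -> exists g, lratio hq hu t g < e) ->
  (forall t M, exists g, M < lratio hq hu t g) ->
  (* cutoff *)
  -xu < c < xq ->
  (* taus = tau*(theta), the unique equalizing prejudice *)
  -xu < taus < xq ->
  (forall tau, -xu < tau < xq ->
     (s1 hq hu pi xq xu theta tau = s2 hq hu pi xq xu theta tau <-> tau = taus)) ->
  (* hypothesis of the theorem *)
  phi hq hu pi theta < beta xq xu c ->
  exists L : R,
    (regret xq xu c (s1 hq hu pi xq xu theta tau) Q @[tau --> taus^'+] --> L) /\
    (regret xq xu c (s2 hq hu pi xq xu theta tau) Q @[tau --> taus^'-] --> L).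
Proof.
move=> pi01 q0 u0 hqp hup hqm hum _ _ hqfin hufin lc _ lmono small big _
  taur eqH _.
have /andP[p0 p1] := pi01.
have /andP[taus1 taus2] := taur.
set fq := hq theta; set fu := hu theta; set l := lratio hq hu theta.
have fqp : forall x, 0 < fq x by move=> x; exact: hqp.
have fup : forall x, 0 < fu x by move=> x; exact: hup.
have fqi := @integ_sec R hq theta hqp hqm hqfin.
have fui := @integ_sec R hu theta hup hum hufin.
have lc' : continuous l.
  move=> g.
  have H : (theta, x) @[x --> g] --> (theta, g).
    exact: (cvg_pair (cvg_cst theta) cvg_id).
  exact: (continuous_cvg _ (lc (theta, g)) H).
have lm : forall g1 g2, g1 < g2 -> l g1 < l g2 by exact: lmono.
have ls : forall e, 0 < e -> exists g, l g < e by exact: small.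
have lb : forall M, exists g, M < l g by exact: big.
have llt : {mono l : x y / x < y} by exact: (leW_mono (le_mono lm)).
pose T tau := @ainv R l (@thr R pi xq xu tau).
have accE : forall tau, -xu < tau < xq ->
    accset hq hu pi xq xu theta tau = `]T tau, +oo[%classic.
  move=> tau taur'; have tp := @thr_pos R pi xq xu tau pi01 q0 u0 taur'.
  have E : l (T tau) = thr pi xq xu tau by exact: (@ainvP R l lc' lm ls lb _ tp).
  rewrite /accset; apply/seteqP; split => g /=; rewrite in_itv /= andbT.
  - by rewrite -E => H; rewrite -llt; exact: H.
  - by rewrite -E => H; rewrite -llt in H; exact: H.
set Fq := @Fint R fq; set Fu := @Fint R fu.
set M := margmass hq hu pi theta.
have M0 : 0 < M.
  rewrite /M /margmass /smass; apply: addr_gt0; apply: mulr_gt0.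
  - by [].
  - exact: Rint_setT_pos.
  - by rewrite subr_gt0.
  - exact: Rint_setT_pos.
pose S1 a := pi * Fq a / (pi * Fq a + (1 - pi) * Fu a).
pose S2 a := (pi * Fq a + (1 - pi) * Fu a) / M.
have s1E : forall tau, -xu < tau < xq -> s1 hq hu pi xq xu theta tau = S1 (T tau).
  by move=> tau h; rewrite /s1 /accmass /smass accE.
have s2E : forall tau, -xu < tau < xq -> s2 hq hu pi xq xu theta tau = S2 (T tau).
  by move=> tau h; rewrite /s2 /accmass /smass accE.
have Fqp : forall a, 0 < Fq a by move=> a; apply: Fint_pos.
have Fup : forall a, 0 < Fu a by move=> a; apply: Fint_pos.
have q1 : 0 < 1 - pi by rewrite subr_gt0.
have den0 : forall a, 0 < pi * Fq a + (1 - pi) * Fu a.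
  by move=> a; rewrite addr_gt0 // mulr_gt0.
have S1lt : forall a b, a < b -> S1 a < S1 b.
  move=> a b ab; rewrite /S1 ltr_pdivrMr // mulrAC ltr_pdivlMr //.
  have lm' : forall x y, x < y -> fq x / fu x < fq y / fu y by exact: lm.
  have H := @Fratio R fq fu fqp fup fqi fui lm' a b ab.
  rewrite -subr_gt0.
  have -> : pi * Fq b * (pi * Fq a + (1 - pi) * Fu a) -
    pi * Fq a * (pi * Fq b + (1 - pi) * Fu b) =
    pi * (1 - pi) * (Fq b * Fu a - Fq a * Fu b) by ring.
  by rewrite !mulr_gt0 // subr_gt0.
have S2lt : forall a b, a < b -> S2 b < S2 a.
  move=> a b ab; rewrite /S2 ltr_pM2r ?invr_gt0 //.
  apply: ltrD; rewrite ltr_pM2l //.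
  - exact: (@Fint_lt R fq a b fqp fqi ab).
  - exact: (@Fint_lt R fu a b fup fui ab).
have Tlt : forall t1 t2, -xu < t1 -> t2 < xq -> t1 < t2 -> T t1 < T t2.
  move=> t1 t2 h1 h2 t12; apply: ainv_lt => //.
  - apply: thr_pos => //; rewrite h1 /=; exact: lt_trans t12 h2.
  - exact: thr_lt.
have Tc : T x @[x --> taus] --> T taus.
  apply: (continuous_cvg _ _ (@thr_cont R pi xq xu taus p0 taus2)).
  exact: @ainv_cont R l lc' lm ls lb _ (@thr_pos R pi xq xu taus pi01 q0 u0 taur).
have Fqc : Fq (T x) @[x --> taus] --> Fq (T taus).
  exact: (continuous_cvg _ (@Fint_cont R fq fqi (T taus)) Tc).
have Fuc : Fu (T x) @[x --> taus] --> Fu (T taus).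
  exact: (continuous_cvg _ (@Fint_cont R fu fui (T taus)) Tc).
have denc : (pi * Fq (T x) + (1 - pi) * Fu (T x)) @[x --> taus] -->
    (pi * Fq (T taus) + (1 - pi) * Fu (T taus)).
  by apply: cvgD; apply: cvgMr.
have S1c : S1 (T x) @[x --> taus] --> S1 (T taus).
  apply: cvgM; first exact: cvgMr.
  by apply: cvgV => //; rewrite gt_eqF.
have S2c : S2 (T x) @[x --> taus] --> S2 (T taus).
  exact: cvgMl.
set s0 := S1 (T taus).
have s0E : S2 (T taus) = s0.
  by rewrite /s0 -s1E // -s2E //; apply/esym/eqH.
exists (Nval xq xu s0 - (if c <= Nval xq xu s0 then 1 else 0) *
     ((if Q then 1 else 0) * xq - (1 - (if Q then 1 else 0)) * xu)).
split.
- apply: regret_lim => //.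
  + apply: cvg_trans (near_eq_cvg _) (cvg_at_right_filter S1c).
    near=> x; rewrite s1E //.
    apply/andP; split.
      by apply: lt_trans taus1 _; near: x; exact: nbhs_right_gt.
    by near: x; exact: nbhs_right_lt.
  + near=> x; rewrite s1E; last first.
      apply/andP; split.
        by apply: lt_trans taus1 _; near: x; exact: nbhs_right_gt.
      by near: x; exact: nbhs_right_lt.
    apply: S1lt; apply: Tlt => //.
- apply: regret_lim => //.
  + rewrite -s0E.
    apply: cvg_trans (near_eq_cvg _) (cvg_at_left_filter S2c).
    near=> x; rewrite s2E //.
    apply/andP; split.
      by near: x; exact: nbhs_left_gt.
    by apply: lt_trans taus2; near: x; exact: nbhs_left_lt.
  + near=> x; rewrite s2E -?s0E; last first.
      apply/andP; split.
        by near: x; exact: nbhs_left_gt.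
      by apply: lt_trans taus2; near: x; exact: nbhs_left_lt.
    apply: S2lt; apply: Tlt => //.
Unshelve. all: by end_near. Qed.
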